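(* Let $H$ be a pre-Schreier monoid. Then $1s\Rightarrow 0s$, $3s\Rightarrow 0s$, $1s\Leftrightarrow 2s$, $2s\Rightarrow 3s$, $1s\Rightarrow 4s$, $2s\Rightarrow 5s$, $3s\Rightarrow 6s$, $4s\Leftrightarrow 5s$, $4s\Rightarrow 4's$, $5s\Rightarrow 5's$.
   Context: A monoid means a commutative cancellative monoid (written multiplicatively); $H^{\ast}$ is its unit group, $\mathbb{N}=\{1,2,\dots\}$, $\mathbb{N}_0=\{0,1,2,\dots\}$. Elements are relatively prime ($a\perp b$) if all their common divisors are units. $\mathrm{Sqf}\,H$: elements not of the form $b^2c$ with $b,c\in H$, $b\notin H^{\ast}$. $H$ is pre-Schreier if for all $a,b,c\in H$ with $a\mid bc$ there exist $a_1,a_2\in H$ with $a=a_1a_2$, $a_1\mid b$, $a_2\mid c$. The conditions, each required for every $a\in H$: 0s: $a=s_1\cdots s_n$ for some $n\in\mathbb{N}$, $s_i\in\mathrm{Sqf}\,H$; 1s: $a=s_1s_2^2\cdots s_n^n$ with $n\in\mathbb{N}$, $s_i\in\mathrm{Sqf}\,H$, $s_i\perp s_j$ for $i\ne j$; 2s: $a=s_1\cdots s_n$ with $n\in\mathbb{N}$, $s_i\in\mathrm{Sqf}\,H$, $s_i\mid s_{i+1}$ for $i<n$; 3s: $a=s_0s_1^2s_2^{2^2}\cdots s_n^{2^n}$ with $n\in\mathbb{N}_0$, $s_i\in\mathrm{Sqf}\,H$; 4s: $a=bc$ with $b\in H$, $c\in\mathrm{Sqf}\,H$, $b\perp c$,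 and some $d\in\mathrm{Sqf}\,H$ with $d^2\mid b$, $b\mid d^n$ for some $n\in\mathbb{N}$; 4's: $a=bc$ with $b\in H$, $c\in\mathrm{Sqf}\,H$, $b\perp c$, and every $d\in\mathrm{Sqf}\,H$ with $d\mid b$ satisfies $d^2\mid b$; 5s: $a=bc$ with $b\in H$, $c\in\mathrm{Sqf}\,H$ and $a\mid c^n$ for some $n\in\mathbb{N}$; 5's: $a=bc$ with $b\in H$, $c\in\mathrm{Sqf}\,H$ and every $d\in\mathrm{Sqf}\,H$ with $d\mid a$ satisfies $d\mid c$; 6s: $a=b^2c$ with $b\in H$, $c\in\mathrm{Sqf}\,H$. *)

(* Defs.v *)
From Stdlib Require Import Arith.

Record CCMonoid := {
  carrier :> Type;
  mul : carrier -> carrier -> carrier;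
  one : carrier;
  mulA : forall x y z, mul x (mul y z) = mul (mul x y) z;
  mulC : forall x y, mul x y = mul y x;
  mul1 : forall x, mul one x = x;
  mulK : forall x y z, mul x y = mul x z -> y = z
}.

Section Defs.
Variable H : CCMonoid.
Local Notation "x * y" := (mul H x y).

Definition is_unit (x : H) : Prop := exists y : H, x * y = one H.

Definition divides (a b : H) : Prop := exists c : H, b = a * c.

Definition rel_prime (a b : H) : Prop :=
  forall d : H, divides d a -> divides d b -> is_unit d.

Definition Sqf (a : H) : Prop :=
  ~ (exists b c : H, a = b * b * c /\ ~ is_unit b).

Fixpoint pow (x : H) (n : nat) : H :=
  match n with O => one H | S k => x * pow x k end.

Fixpoint prod_from (f : nat -> H) (lo len : nat) : H :=
  match len with
  | O => one H
  | S k => f lo * prod_from f (S lo) k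
  end.

Definition prod_range (f : nat -> H) (lo hi : nat) : H :=
  prod_from f lo (S hi - lo).

Definition pre_Schreier : Prop :=
  forall a b c : H, divides a (b * c) ->
    exists a1 a2 : H, a = a1 * a2 /\ divides a1 b /\ divides a2 c.

Definition cond0s : Prop := forall a : H,
  exists (n : nat) (s : nat -> H), 1 <= n /\
    (forall i, 1 <= i <= n -> Sqf (s i)) /\
    a = prod_range s 1 n.

Definition cond1s : Prop := forall a : H,
  exists (n : nat) (s : nat -> H), 1 <= n /\
    (forall i, 1 <= i <= n -> Sqf (s i)) /\
    (forall i j, 1 <= i <= n -> 1 <= j <= n -> i <> j -> rel_prime (s i) (s j)) /\
    a = prod_range (fun i => pow (s i) i) 1 n.

Definition cond2s : Prop := forall a : H,
  exists (n : nat) (s : nat -> H), 1 <= n /\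
    (forall i, 1 <= i <= n -> Sqf (s i)) /\
    (forall i, 1 <= i < n -> divides (s i) (s (S i))) /\
    a = prod_range s 1 n.

Definition cond3s : Prop := forall a : H,
  exists (n : nat) (s : nat -> H),
    (forall i, i <= n -> Sqf (s i)) /\
    a = prod_range (fun i => pow (s i) (2 ^ i)) 0 n.

Definition cond4s : Prop := forall a : H,
  exists b c : H, a = b * c /\ Sqf c /\ rel_prime b c /\
    exists d : H, Sqf d /\ divides (pow d 2) b /\
      exists n : nat, 1 <= n /\ divides b (pow d n).

Definition cond4's : Prop := forall a : H,
  exists b c : H, a = b * c /\ Sqf c /\ rel_prime b c /\
    forall d : H, Sqf d -> divides d b -> divides (pow d 2) b.

Definition cond5s : Prop := forall a : H,
  exists b c : H, a = b * c /\ Sqf c /\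
    exists n : nat, 1 <= n /\ divides a (pow c n).

Definition cond5's : Prop := forall a : H,
  exists b c : H, a = b * c /\ Sqf c /\
    forall d : H, Sqf d -> divides d a -> divides d c.

Definition cond6s : Prop := forall a : H,
  exists b c : H, a = pow b 2 * c /\ Sqf c.

End Defs.

(* Main.v *)
Require Import Defs.
From Stdlib Require Import Arith List Lia Permutation Classical.
Import ListNotations.

Local Notation "x ** y" := (mul _ x y) (at level 40, left associativity).

Definition lprod {H : CCMonoid} (l : list H) : H := fold_right (mul H) (one H) l.

Inductive mexpr := MAtom (n : nat) | MOne | MMul (a b : mexpr).
Fixpoint meval {H : CCMonoid} (env : list H) (e : mexpr) : H :=
  match e with MAtom n => nth n env (one H) | MOne => one H
  | MMul a b => meval env a ** meval env b end.
Fixpoint mflat (e : mexpr) : list nat :=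
  match e with MAtom n => [n] | MOne => [] | MMul a b => mflat a ++ mflat b end.
Fixpoint ins (x : nat) (l : list nat) := match l with [] => [x]
  | y :: r => if Nat.leb x y then x :: y :: r else y :: ins x r end.
Fixpoint isort (l : list nat) := match l with [] => [] | x :: r => ins x (isort r) end.

Lemma ins_perm x l : Permutation (x :: l) (ins x l).
Proof. induction l as [|y r IH]; simpl; auto.
  destruct (Nat.leb x y); auto.
  eapply perm_trans; [apply perm_swap|]. auto. Qed.
Lemma isort_perm l : Permutation l (isort l).
Proof. induction l; simpl; auto. eapply perm_trans; [|apply ins_perm]. auto. Qed.

Lemma mulA' {H : CCMonoid} (x y z : H) : x ** (y ** z) = x ** y ** z.
Proof. apply mulA. Qed.

Lemma lprod_app {H : CCMonoid} (l1 l2 : list H) : lprod (l1 ++ l2) = lprod l1 ** lprod l2.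
Proof. induction l1; simpl. now rewrite mul1. rewrite IHl1. apply mulA. Qed.

Lemma lprod_perm {H : CCMonoid} (l1 l2 : list H) : Permutation l1 l2 -> lprod l1 = lprod l2.
Proof. induction 1; simpl; auto. congruence.
  rewrite !mulA. f_equal. apply mulC. congruence. Qed.

Lemma meval_flat {H : CCMonoid} (env : list H) e :
  meval env e = lprod (map (fun n => nth n env (one H)) (mflat e)).
Proof. induction e; simpl; auto. now rewrite mulC, mul1.
  rewrite map_app, lprod_app. congruence. Qed.

Lemma mac_sound {H : CCMonoid} (env : list H) e1 e2 :
  isort (mflat e1) = isort (mflat e2) -> meval env e1 = meval env e2.
Proof. intro E. rewrite !meval_flat. apply lprod_perm. apply Permutation_map.
  eapply perm_trans; [apply isort_perm|]. rewrite E. apply Permutation_sym, isort_perm. Qed.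

Ltac mfind x l := lazymatch l with
  | cons x _ => constr:(O)
  | cons _ ?r => let n := mfind x r in constr:(S n)
  end.
Ltac mcollect t env := lazymatch t with
  | mul _ ?a ?b => let env1 := mcollect a env in mcollect b env1
  | one _ => env
  | _ => match constr:(tt) with
        | _ => let _ := mfind t env in env
        | _ => constr:(cons t env)
        end
  end.
Ltac mreify env t := lazymatch t with
  | mul _ ?a ?b => let ea := mreify env a in let eb := mreify env b in constr:(MMul ea eb)
  | one _ => constr:(MOne)
  | _ => let n := mfind t env in constr:(MAtom n)
  end.
Ltac mac := lazymatch goal with |- @eq ?T ?l ?r =>
  let env0 := mcollect l (@nil T) in
  let env1 := mcollect r env0 in
  let el := mreify env1 l in let er := mreify env1 r in
  change (meval env1 el = meval env1 er); apply mac_sound; vm_compute; reflexivity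
end.

Goal forall (H : CCMonoid) (a b c : H), a ** (b ** one H) ** c = c ** b ** a.
Proof. intros. mac. Qed.
Lemma dvd_refl {H : CCMonoid} (a : H) : divides H a a.
Proof. exists (one H). mac. Qed.
Lemma dvd_trans {H : CCMonoid} (a b c : H) : divides H a b -> divides H b c -> divides H a c.
Proof. intros [x ->] [y ->]. exists (x ** y). mac. Qed.
Lemma dvd_mulr {H : CCMonoid} (a b : H) : divides H a (a ** b).
Proof. exists b. reflexivity. Qed.
Lemma dvd_mull {H : CCMonoid} (a b : H) : divides H b (a ** b).
Proof. exists a. mac. Qed.
Lemma dvd_mul {H : CCMonoid} (a b c d : H) : divides H a b -> divides H c d -> divides H (a ** c) (b ** d).
Proof. intros [x ->] [y ->]. exists (x ** y). mac. Qed.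
Lemma one_dvd {H : CCMonoid} (a : H) : divides H (one H) a.
Proof. exists a. now rewrite mul1. Qed.
Lemma unit_one {H : CCMonoid} : is_unit H (one H).
Proof. exists (one H). apply mul1. Qed.
Lemma unit_dvd {H : CCMonoid} (u a : H) : is_unit H u -> divides H u a.
Proof. intros [v Hv]. exists (v ** a). rewrite mulA, Hv. now rewrite mul1. Qed.
Lemma dvd_unit {H : CCMonoid} (a u : H) : divides H a u -> is_unit H u -> is_unit H a.
Proof. intros [x ->] [v Hv]. exists (x ** v). rewrite <- Hv. mac. Qed.
Lemma unit_mul {H : CCMonoid} (a b : H) : is_unit H a -> is_unit H b -> is_unit H (a ** b).
Proof. intros [x Hx] [y Hy]. exists (x ** y).
  transitivity ((a ** x) ** (b ** y)). mac. rewrite Hx, Hy. apply mul1. Qed.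
Lemma dvd_mul_cancel {H : CCMonoid} (a b c : H) : divides H (c ** a) (c ** b) -> divides H a b.
Proof. intros [x Hx]. exists x. apply (mulK H c). rewrite Hx. mac. Qed.

Lemma Sqf_dvd {H : CCMonoid} (s d : H) : Sqf H s -> divides H d s -> Sqf H d.
Proof. intros Hs [e ->] [b [c [E Hb]]]. apply Hs. exists b, (c ** e). split; auto.
  rewrite E. mac. Qed.
Lemma Sqf_sq {H : CCMonoid} (s b : H) : Sqf H s -> divides H (b ** b) s -> is_unit H b.
Proof. intros Hs [c E]. apply NNPP. intro Hb. apply Hs. exists b, c. auto. Qed.
Lemma Sqf_unit {H : CCMonoid} (u : H) : is_unit H u -> Sqf H u.
Proof. intros Hu [b [c [E Hb]]]. apply Hb. apply (dvd_unit _ u); auto. rewrite E.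
  exists (b ** c). mac. Qed.
Lemma Sqf_one {H : CCMonoid} : Sqf H (one H).
Proof. apply Sqf_unit, unit_one. Qed.

Lemma rp_sym {H : CCMonoid} (a b : H) : rel_prime H a b -> rel_prime H b a.
Proof. intros R d H1 H2. auto. Qed.
Lemma rp_dvd_l {H : CCMonoid} (a b d : H) : rel_prime H a b -> divides H d a -> rel_prime H d b.
Proof. intros R Hd e H1 H2. apply R; auto. apply (dvd_trans e d a); auto. Qed.
Lemma rp_dvd_r {H : CCMonoid} (a b d : H) : rel_prime H a b -> divides H d b -> rel_prime H a d.
Proof. intros R Hd e H1 H2. apply R; auto. apply (dvd_trans e d b); auto. Qed.
Lemma rp_unit {H : CCMonoid} (a u : H) : is_unit H u -> rel_prime H a u.
Proof. intros Hu d _ H2. eapply dvd_unit; eauto. Qed.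
Lemma Sqf_rp {H : CCMonoid} (s t : H) : Sqf H (s ** t) -> rel_prime H s t.
Proof. intros Hs d [x ->] [y ->]. apply (Sqf_sq _ _ Hs). exists (x ** y). mac. Qed.

Lemma rp_dvd_mul {H : CCMonoid} (hS : pre_Schreier H) (a b c : H) :
  rel_prime H a b -> divides H a (b ** c) -> divides H a c.
Proof. intros R Hd. destruct (hS _ _ _ Hd) as [a1 [a2 [E [H1 H2]]]].
  assert (U : is_unit H a1). { apply R; auto. rewrite E. apply dvd_mulr. }
  destruct U as [v Hv]. destruct H2 as [e He]. exists (v ** e). rewrite E, He.
  transitivity ((a1 ** v) ** a2 ** e). rewrite Hv, mul1. mac. mac. Qed.
Lemma rp_mul_r {H : CCMonoid} (hS : pre_Schreier H) (a b c : H) :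
  rel_prime H a b -> rel_prime H a c -> rel_prime H a (b ** c).
Proof. intros R1 R2 d Hda Hd. destruct (hS _ _ _ Hd) as [d1 [d2 [E [H1 H2]]]].
  subst d. apply unit_mul.
  - apply R1; auto. eapply dvd_trans; [apply dvd_mulr|]; eauto.
  - apply R2; auto. eapply dvd_trans; [apply dvd_mull|]; eauto. Qed.
Lemma Sqf_mul {H : CCMonoid} (hS : pre_Schreier H) (s t : H) :
  Sqf H s -> Sqf H t -> rel_prime H s t -> Sqf H (s ** t).
Proof. intros Hs Ht R [b [c [E Hb]]]. apply Hb.
  assert (Hd : divides H b (s ** t)). { rewrite E. exists (b ** c). mac. }
  destruct (hS _ _ _ Hd) as [b1 [b2 [Eb [H1 H2]]]]. subst b.
  assert (E2 : s ** t = (b1 ** b1) ** (b2 ** b2 ** c)). { rewrite E. mac. }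
  apply unit_mul.
  - apply (Sqf_sq s); auto. apply (rp_dvd_mul hS _ t).
    + assert (R1 : rel_prime H t b1) by (apply rp_sym; apply (rp_dvd_l s); auto).
      apply rp_sym. apply rp_mul_r; auto.
    + rewrite (mulC H t s), E2. apply dvd_mulr.
  - apply (Sqf_sq t); auto. apply (rp_dvd_mul hS _ s).
    + assert (R1 : rel_prime H s b2) by (apply (rp_dvd_r s t); auto).
      apply rp_sym. apply rp_mul_r; auto.
    + rewrite E2. exists (b1 ** b1 ** c). mac. Qed.
Lemma rp_pow {H : CCMonoid} (hS : pre_Schreier H) (a b : H) n :
  rel_prime H a b -> rel_prime H a (pow H b n).
Proof. intro R. induction n; simpl. apply rp_unit, unit_one. apply rp_mul_r; auto. Qed.
Lemma dvd_rp_mul {H : CCMonoid} (hS : pre_Schreier H) (e1 e2 d : H) :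
  divides H e1 d -> divides H e2 d -> rel_prime H e1 e2 -> divides H (e1 ** e2) d.
Proof. intros [f ->] H2 R. assert (divides H e2 f) as [g ->].
  { apply (rp_dvd_mul hS _ e1); auto using rp_sym. }
  exists g. mac. Qed.
Lemma Sqf_dvd_pow {H : CCMonoid} (hS : pre_Schreier H) (d : H) n :
  forall e, Sqf H e -> divides H e (pow H d n) -> divides H e d.
Proof. induction n; simpl; intros e He Hd.
  - apply unit_dvd. eapply dvd_unit; eauto using unit_one.
  - destruct (hS _ _ _ Hd) as [e1 [e2 [E [H1 H2]]]]. subst e.
    apply dvd_rp_mul; auto. apply IHn; auto. eapply Sqf_dvd; eauto. apply dvd_mull.
    apply Sqf_rp; auto. Qed.
Lemma pow_dvd {H : CCMonoid} (a b : H) n : divides H a b -> divides H (pow H a n) (pow H b n).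
Proof. intro D. induction n; simpl. apply dvd_refl. now apply dvd_mul. Qed.
Lemma pow_mul {H : CCMonoid} (a b : H) n : pow H (a ** b) n = pow H a n ** pow H b n.
Proof. induction n; simpl. now rewrite mul1. rewrite IHn. mac. Qed.
Lemma pow_add {H : CCMonoid} (a : H) m n : pow H a (m + n) = pow H a m ** pow H a n.
Proof. induction m; simpl. now rewrite mul1. rewrite IHm. mac. Qed.
Lemma pow2 {H : CCMonoid} (a : H) : pow H a 2 = a ** a.
Proof. simpl. mac. Qed.
Lemma pow1 {H : CCMonoid} (a : H) : pow H a 1 = a.
Proof. simpl. mac. Qed.

Lemma prod_from_ext {H : CCMonoid} (f g : nat -> H) len : forall lo,
  (forall i, lo <= i < lo + len -> f i = g i) -> prod_from H f lo len = prod_from H g lo len.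
Proof. induction len; intros lo E; simpl; auto. f_equal. apply E; lia. apply IHlen.
  intros; apply E; lia. Qed.
Lemma prod_from_shift {H : CCMonoid} (f : nat -> H) len : forall lo,
  prod_from H f (S lo) len = prod_from H (fun i => f (S i)) lo len.
Proof. induction len; intros lo; simpl; auto. f_equal. apply IHlen. Qed.
Lemma prod_from_mul {H : CCMonoid} (f g : nat -> H) len : forall lo,
  prod_from H (fun i => f i ** g i) lo len = prod_from H f lo len ** prod_from H g lo len.
Proof. induction len; intros lo; simpl. now rewrite mul1. rewrite IHlen. mac. Qed.
Lemma prod_from_map {H : CCMonoid} (f : nat -> H) len : forall lo,
  lprod (map f (seq lo len)) = prod_from H f lo len.
Proof. induction len; intros lo; simpl; auto. f_equal. apply IHlen. Qed.
Lemma prod_from_nth {H : CCMonoid} (L : list H) : forall lo,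
  prod_from H (fun i => nth (i - lo) L (one H)) lo (length L) = lprod L.
Proof. induction L as [|x r IH]; intros lo; simpl; auto. rewrite Nat.sub_diag. f_equal.
  rewrite <- (IH (S lo)). apply prod_from_ext. intros i Hi.
  replace (i - lo) with (S (i - S lo)) by lia. reflexivity. Qed.
Lemma dvd_prod_from {H : CCMonoid} (f : nat -> H) len : forall lo i,
  lo <= i < lo + len -> divides H (f i) (prod_from H f lo len).
Proof. induction len; intros lo i Hi; simpl. lia.
  destruct (Nat.eq_dec i lo). subst. apply dvd_mulr.
  eapply dvd_trans; [apply (IHlen (S lo)); lia| apply dvd_mull]. Qed.
Lemma rp_prod {H : CCMonoid} (hS : pre_Schreier H) (x : H) (f : nat -> H) len : forall lo,
  (forall i, lo <= i < lo + len -> rel_prime H x (f i)) -> rel_prime H x (prod_from H f lo len).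
Proof. induction len; intros lo E; simpl. apply rp_unit, unit_one.
  apply rp_mul_r; auto. apply E; lia. apply IHlen. intros; apply E; lia. Qed.
Lemma Sqf_prod {H : CCMonoid} (hS : pre_Schreier H) (f : nat -> H) len : forall lo,
  (forall i, lo <= i < lo + len -> Sqf H (f i)) ->
  (forall i j, lo <= i < lo + len -> lo <= j < lo + len -> i <> j -> rel_prime H (f i) (f j)) ->
  Sqf H (prod_from H f lo len).
Proof. induction len; intros lo E1 E2; simpl. apply Sqf_one.
  apply Sqf_mul; auto. apply E1; lia. apply IHlen; intros; [apply E1|apply E2]; lia.
  apply rp_prod; auto. intros; apply E2; lia. Qed.
Lemma lprod_rev {H : CCMonoid} (l : list H) : lprod (rev l) = lprod l.
Proof. apply lprod_perm, Permutation_sym, Permutation_rev. Qed.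
Lemma prod_range1 {H : CCMonoid} (f : nat -> H) n : prod_range H f 1 n = prod_from H f 1 n.
Proof. unfold prod_range. simpl. now rewrite Nat.sub_0_r. Qed.
Lemma prod_range0 {H : CCMonoid} (f : nat -> H) n : prod_range H f 0 n = prod_from H f 0 (S n).
Proof. reflexivity. Qed.

Definition DC {H : CCMonoid} (l : list H) : Prop :=
  forall i, divides H (nth (S i) l (one H)) (nth i l (one H)).
Lemma hd_nth {H : CCMonoid} (l : list H) : hd (one H) l = nth 0 l (one H).
Proof. destruct l; reflexivity. Qed.
Lemma DC_cons {H : CCMonoid} (x : H) r : DC (x :: r) <-> divides H (hd (one H) r) x /\ DC r.
Proof. split.
  - intro D. split. rewrite hd_nth. apply (D 0). intro i. apply (D (S i)).
  - intros [D1 D2] [|i]; simpl. now rewrite <- hd_nth. apply D2. Qed.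
Lemma DC_nil {H : CCMonoid} : DC (@nil H).
Proof. intros [|i]; apply dvd_refl. Qed.
Lemma DC_head {H : CCMonoid} (l : list H) : DC l -> forall i, divides H (nth i l (one H)) (hd (one H) l).
Proof. intros D i. rewrite hd_nth. induction i. apply dvd_refl. eapply dvd_trans; eauto. Qed.
Lemma DC_lprod_pow {H : CCMonoid} (l : list H) : DC l -> divides H (lprod l) (pow H (hd (one H) l) (length l)).
Proof. induction l as [|x r IH]; simpl; intro D. apply dvd_refl.
  apply DC_cons in D as [D1 D2]. apply dvd_mul. apply dvd_refl.
  eapply dvd_trans. apply IH; auto. apply pow_dvd; auto. Qed.
Lemma hd_dvd_lprod {H : CCMonoid} (l : list H) : divides H (hd (one H) l) (lprod l).
Proof. destruct l; simpl. apply dvd_refl. apply dvd_mulr. Qed.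

Definition CH {H : CCMonoid} (a : H) : Prop :=
  exists l, DC l /\ Sqf H (hd (one H) l) /\ a = lprod l.
Lemma CH_ne {H : CCMonoid} (a : H) : CH a ->
  exists x r, DC (x :: r) /\ Sqf H x /\ a = lprod (x :: r).
Proof. intros [[|x r] [D [S E]]].
  - exists (one H), []. repeat split. apply DC_cons. split; [apply dvd_refl|apply DC_nil].
    apply Sqf_one. simpl in *. now rewrite mul1.
  - exists x, r. auto. Qed.

Lemma c2_CH {H : CCMonoid} (c2 : cond2s H) (a : H) : CH a.
Proof. destruct (c2 a) as [n [s [Hn [Hsq [Hch E]]]]].
  set (L := map s (seq 1 n)).
  assert (HL : length L = n) by (unfold L; now rewrite length_map, length_seq).
  assert (nthL : forall k, k < n -> nth k (rev L) (one H) = s (n - k)).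
  { intros k Hk. rewrite rev_nth by lia. rewrite HL.
    rewrite (nth_indep L (one H) (s 0)) by (unfold L in *; lia). unfold L. rewrite map_nth, seq_nth by lia.
    f_equal. lia. }
  exists (rev L). split; [|split].
  - intro i. destruct (Nat.lt_ge_cases (S i) n).
    + rewrite !nthL by lia. replace (n - i) with (S (n - S i)) by lia. apply Hch. lia.
    + rewrite (nth_overflow (rev L)). apply one_dvd. rewrite length_rev. lia.
  - rewrite hd_nth, nthL by lia. apply Hsq. lia.
  - rewrite E, lprod_rev, prod_range1. unfold L. now rewrite prod_from_map. Qed.

Lemma CH_c2 {H : CCMonoid} (ch : forall a : H, CH a) : cond2s H.
Proof. intro a. destruct (CH_ne a (ch a)) as [x [r [D [Sx E]]]].
  set (l := x :: r). set (n := length l).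
  exists n, (fun i => nth (i - 1) (rev l) (one H)).
  assert (Hr : forall i, 1 <= i <= n -> nth (i - 1) (rev l) (one H) = nth (n - i) l (one H)).
  { intros i Hi. rewrite rev_nth by (unfold n in Hi; lia). f_equal. unfold n. lia. }
  split; [unfold n, l; simpl; lia|split; [|split]].
  - intros i Hi. rewrite Hr by lia. apply (Sqf_dvd x); auto. apply (DC_head l D).
  - intros i Hi. rewrite !Hr by lia. replace (n - i) with (S (n - S i)) by lia. apply D.
  - rewrite prod_range1, E. unfold n, l. rewrite <- lprod_rev, <- (prod_from_nth (rev (x :: r)) 1), length_rev. reflexivity. Qed.

Lemma c1_CH {H : CCMonoid} (hS : pre_Schreier H) (c1 : cond1s H) (a : H) : CH a.
Proof.
  assert (L1 : forall n (r : nat -> H), (forall i, 1 <= i <= n -> Sqf H (r i)) ->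
    (forall i j, 1 <= i <= n -> 1 <= j <= n -> i <> j -> rel_prime H (r i) (r j)) ->
    exists l, DC l /\ hd (one H) l = prod_from H r 1 n /\
      lprod l = prod_from H (fun i => pow H (r i) i) 1 n).
  { induction n; intros r E1 E2.
    - exists []. simpl. split; auto. apply DC_nil.
    - destruct (IHn (fun i => r (S i))) as [l [D [Hh Hp]]].
      + intros; apply E1; lia.
      + intros; apply E2; lia.
      + exists (prod_from H r 1 (S n) :: l). split; [|split]; auto.
        * apply DC_cons. split; auto. rewrite Hh. simpl. rewrite (prod_from_shift r). apply dvd_mull.
        * simpl lprod. rewrite Hp. simpl prod_from. rewrite (prod_from_shift r), (prod_from_shift (fun i => pow H (r i) i)).
          rewrite (prod_from_ext (fun i => pow H (r (S i)) (S i))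
             (fun i => r (S i) ** pow H (r (S i)) i)) by reflexivity.
          rewrite prod_from_mul. mac. }
  destruct (c1 a) as [n [r [Hn [E1 [E2 E]]]]].
  destruct (L1 n r E1 E2) as [l [D [Hh Hp]]].
  exists l. split; [|split]; auto.
  - rewrite Hh. apply Sqf_prod; auto; intros; [apply E1|apply E2]; lia.
  - now rewrite E, Hp, prod_range1. Qed.

Lemma CH_c1 {H : CCMonoid} (ch : forall a : H, CH a) : cond1s H.
Proof.
  assert (L2 : forall l : list H, DC l -> Sqf H (hd (one H) l) -> exists r,
    (forall i, 1 <= i <= length l -> Sqf H (r i)) /\
    (forall i j, 1 <= i <= length l -> 1 <= j <= length l -> i <> j -> rel_prime H (r i) (r j)) /\
    hd (one H) l = prod_from H r 1 (length l) /\
    lprod l = prod_from H (fun i => pow H (r i) i) 1 (length l)).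
  { induction l as [|x l IH]; intros D Sx.
    - exists (fun _ => one H). simpl. repeat split; try lia.
    - apply DC_cons in D as [[u Hu] D]. simpl in Sx.
      set (y := hd (one H) l) in *.
      assert (Sy : Sqf H y) by (apply (Sqf_dvd x); auto; rewrite Hu; apply dvd_mulr).
      assert (Su : Sqf H u) by (apply (Sqf_dvd x); auto; rewrite Hu; apply dvd_mull).
      assert (Ryu : rel_prime H y u) by (apply Sqf_rp; now rewrite <- Hu).
      destruct (IH D Sy) as [r' [E1 [E2 [Eh Ep]]]].
      set (n' := length l) in *.
      exists (fun i => if Nat.eqb i 1 then u else r' (i - 1)).
      assert (Sh : prod_from H (fun i => if Nat.eqb i 1 then u else r' (i - 1)) 2 n' =
                   prod_from H r' 1 n').
      { rewrite prod_from_shift. apply prod_from_ext. intros i Hi.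
        destruct (Nat.eqb_spec (S i) 1). lia. f_equal. lia. }
      simpl length. fold n'. split; [|split; [|split]].
      + intros i Hi. destruct (Nat.eqb_spec i 1); auto. apply E1; lia.
      + assert (K : forall j, 1 <= j <= S n' -> j <> 1 -> rel_prime H u (r' (j - 1))).
        { intros j Hj Hj1. apply rp_sym. apply (rp_dvd_l y); auto.
          rewrite Eh. apply dvd_prod_from. lia. }
        intros i j Hi Hj Hij. destruct (Nat.eqb_spec i 1), (Nat.eqb_spec j 1).
        lia. subst; auto. apply rp_sym. subst; auto. apply E2; lia.
      + simpl. rewrite Sh, <- Eh, Hu. mac.
      + assert (Sh2 : prod_from H (fun i => pow H (if Nat.eqb i 1 then u else r' (i - 1)) i) 2 n'
                    = prod_from H (fun i => r' i ** pow H (r' i) i) 1 n').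
        { rewrite prod_from_shift. apply prod_from_ext. intros i Hi.
          destruct (Nat.eqb_spec (S i) 1). lia. simpl. now rewrite Nat.sub_0_r. }
        simpl lprod. simpl prod_from. rewrite Ep, Sh2, prod_from_mul, <- Eh, Hu. mac. }
  intro a. destruct (CH_ne a (ch a)) as [x [r [D [Sx E]]]].
  destruct (L2 (x :: r) D Sx) as [s [E1 [E2 [Eh Ep]]]].
  exists (length (x :: r)), s. split; [simpl; lia|]. split; auto. split; auto.
  rewrite prod_range1, E. auto. Qed.

Lemma halving {H : CCMonoid} n : forall l : list H, length l <= n -> DC l ->
  exists t0 l', divides H t0 (hd (one H) l) /\ DC l' /\ divides H (hd (one H) l') (hd (one H) l)
    /\ 2 * length l' <= length l /\ lprod l = t0 ** pow H (lprod l') 2.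
Proof. induction n as [n IH] using lt_wf_ind. intros [|x [|y r]] Hl D.
  - exists (one H), []. simpl. repeat split; try apply dvd_refl; try apply DC_nil; try apply one_dvd; try lia; try mac.
  - exists x, []. simpl. repeat split; try apply dvd_refl; try apply DC_nil; try apply one_dvd; try lia; try mac.
  - apply DC_cons in D as [[u Hu] D]. apply DC_cons in D as [D1 D]. simpl in Hu.
    destruct (IH (length r) ltac:(simpl in Hl; lia) r (le_n _) D) as [t0 [l' [A1 [A2 [A3 [A4 A5]]]]]].
    exists (t0 ** u), (y :: l'). simpl. split; [|split; [|split; [|split]]].
    + rewrite Hu. apply dvd_mul; auto. eapply dvd_trans; eauto. apply dvd_refl.
    + apply DC_cons. split; auto. eapply dvd_trans; eauto.
    + rewrite Hu. apply dvd_mulr.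
    + simpl in A4. lia.
    + rewrite A5, Hu. simpl. mac. Qed.

Lemma prod_from_S {H : CCMonoid} (f : nat -> H) lo len :
  prod_from H f lo (S len) = f lo ** prod_from H f (S lo) len.
Proof. reflexivity. Qed.

Lemma T3_one {H : CCMonoid} : exists n (s : nat -> H), (forall i, i <= n -> Sqf H (s i)) /\
    one H = prod_range H (fun i => pow H (s i) (2 ^ i)) 0 n.
Proof. exists 0, (fun _ => one H). split. intros; apply Sqf_one. rewrite prod_range0. simpl. mac. Qed.

Lemma pow_pow2 {H : CCMonoid} (x : H) i : pow H x (2 ^ S i) = pow H (pow H x (2 ^ i)) 2.
Proof. rewrite Nat.pow_succ_r', pow2. replace (2 * 2 ^ i) with (2 ^ i + 2 ^ i) by lia.
  apply pow_add. Qed.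

Lemma prod_from_sq {H : CCMonoid} (f : nat -> H) lo len :
  prod_from H (fun i => pow H (f i) 2) lo len = pow H (prod_from H f lo len) 2.
Proof. rewrite pow2. rewrite <- prod_from_mul. apply prod_from_ext. intros; apply pow2. Qed.

Lemma T3_step {H : CCMonoid} (t b : H) : Sqf H t ->
  (exists n (s : nat -> H), (forall i, i <= n -> Sqf H (s i)) /\
    b = prod_range H (fun i => pow H (s i) (2 ^ i)) 0 n) ->
  exists n (s : nat -> H), (forall i, i <= n -> Sqf H (s i)) /\
    t ** pow H b 2 = prod_range H (fun i => pow H (s i) (2 ^ i)) 0 n.
Proof. intros St [n [s [E1 E2]]]. exists (S n), (fun i => match i with 0 => t | S k => s k end).
  split. intros [|i] Hi; auto. apply E1; lia.
  rewrite E2, !prod_range0. rewrite (prod_from_S _ 0 (S n)), (prod_from_shift _ (S n) 0).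
  cbv beta iota. rewrite pow1. f_equal.
  rewrite <- prod_from_sq. apply prod_from_ext.
  intros i _. symmetry. apply pow_pow2. Qed.

Lemma CH_c3 {H : CCMonoid} (ch : forall a : H, CH a) : cond3s H.
Proof. assert (K : forall n (l : list H), length l <= n -> DC l -> Sqf H (hd (one H) l) ->
    exists m (s : nat -> H), (forall i, i <= m -> Sqf H (s i)) /\
    lprod l = prod_range H (fun i => pow H (s i) (2 ^ i)) 0 m).
  { induction n as [n IH] using lt_wf_ind. intros l Hl D Sl. destruct l as [|x r].
    - apply T3_one.
    - destruct (halving _ (x :: r) (le_n _) D) as [t0 [l' [A1 [A2 [A3 [A4 A5]]]]]].
      rewrite A5. apply T3_step. eapply Sqf_dvd; eauto.
      apply (IH (length l')). simpl in *; lia. lia. auto. eapply Sqf_dvd; eauto. }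
  intro a. destruct (ch a) as [l [D [Sl E]]]. rewrite E. eapply K; eauto. Qed.

Lemma c3_c6 {H : CCMonoid} : cond3s H -> cond6s H.
Proof. intros c3 a. destruct (c3 a) as [n [s [E1 E2]]].
  exists (prod_from H (fun i => pow H (s (S i)) (2 ^ i)) 0 n), (s 0). split; auto.
  rewrite E2, prod_range0, (prod_from_S _ 0 n), (prod_from_shift _ n 0).
  cbv beta. rewrite pow1, mulC. f_equal.
  rewrite <- prod_from_sq. apply prod_from_ext.
  intros i _. apply pow_pow2. apply E1; lia. Qed.

Definition PSL {H : CCMonoid} (a : H) := exists L, (forall x, In x L -> Sqf H x) /\ a = lprod L.
Lemma PSL_mul {H : CCMonoid} (a b : H) : PSL a -> PSL b -> PSL (a ** b).
Proof. intros [L1 [A1 ->]] [L2 [A2 ->]]. exists (L1 ++ L2). split.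
  intros x Hx. apply in_app_or in Hx as [|]; auto. symmetry; apply lprod_app. Qed.
Lemma PSL_one {H : CCMonoid} : PSL (one H).
Proof. exists []. simpl. split; auto. tauto. Qed.
Lemma PSL_pow {H : CCMonoid} (x : H) k : Sqf H x -> PSL (pow H x k).
Proof. intro Sx. induction k; simpl. apply PSL_one. apply PSL_mul; auto.
  exists [x]. simpl. split. intros y [->|[]]; auto. mac. Qed.
Lemma PSL_prod {H : CCMonoid} (f : nat -> H) len : forall lo,
  (forall i, lo <= i < lo + len -> PSL (f i)) -> PSL (prod_from H f lo len).
Proof. induction len; intros lo E; simpl. apply PSL_one. apply PSL_mul.
  apply E; lia. apply IHlen; intros; apply E; lia. Qed.
Lemma PSL_c0 {H : CCMonoid} : (forall a : H, PSL a) -> cond0s H.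
Proof. intros P a. destruct (P a) as [L [A E]].
  assert (exists L', L' <> [] /\ (forall x, In x L' -> Sqf H x) /\ a = lprod L') as [L' [Ne [A' E']]].
  { destruct L as [|x r]. exists [one H]. simpl in *. split. discriminate. split.
    intros y [<-|[]]. apply Sqf_one. rewrite E. mac. exists (x :: r). split; auto. discriminate. }
  exists (length L'), (fun i => nth (i - 1) L' (one H)). split.
  destruct L'. now destruct Ne. simpl; lia. split.
  intros i Hi. apply A', nth_In. lia.
  rewrite prod_range1, E'. symmetry. apply prod_from_nth. Qed.

Lemma c2_c0 {H : CCMonoid} : cond2s H -> cond0s H.
Proof. intros c2 a. destruct (c2 a) as [n [s [A1 [A2 [A3 A4]]]]]. exists n, s. auto. Qed.

Lemma c3_c0 {H : CCMonoid} : cond3s H -> cond0s H.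
Proof. intro c3. apply PSL_c0. intro a. destruct (c3 a) as [n [s [E1 E2]]].
  rewrite E2. apply PSL_prod. intros; apply PSL_pow, E1; lia. Qed.

Lemma CH_c4 {H : CCMonoid} (hS : pre_Schreier H) (ch : forall a : H, CH a) : cond4s H.
Proof. intro a. destruct (CH_ne a (ch a)) as [x [r [D [Sx E]]]].
  apply DC_cons in D as [[u Hu] D]. set (y := hd (one H) r) in *.
  assert (Sy : Sqf H y) by (apply (Sqf_dvd x); auto; rewrite Hu; apply dvd_mulr).
  assert (Su : Sqf H u) by (apply (Sqf_dvd x); auto; rewrite Hu; apply dvd_mull).
  assert (Ryu : rel_prime H y u) by (apply Sqf_rp; now rewrite <- Hu).
  assert (Bd : divides H (y ** lprod r) (pow H y (S (length r)))).
  { simpl. apply dvd_mul. apply dvd_refl. apply DC_lprod_pow; auto. }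
  exists (y ** lprod r), u. split; [|split; [|split]]; auto.
  - rewrite E. simpl. rewrite Hu. mac.
  - apply rp_sym. eapply rp_dvd_r; [|apply Bd]. apply rp_pow; auto using rp_sym.
  - exists y. split; auto. split.
    + rewrite pow2. apply dvd_mul. apply dvd_refl. apply hd_dvd_lprod.
    + exists (S (length r)). split; auto. lia. Qed.

Lemma CH_c5 {H : CCMonoid} (ch : forall a : H, CH a) : cond5s H.
Proof. intro a. destruct (CH_ne a (ch a)) as [x [r [D [Sx E]]]].
  exists (lprod r), x. split; [|split]; auto.
  - rewrite E. simpl. apply mulC.
  - exists (length (x :: r)). split. simpl; lia. rewrite E. apply (DC_lprod_pow (x :: r) D). Qed.

Lemma split_lemma {H : CCMonoid} (hS : pre_Schreier H) k : forall (b c : H), Sqf H c ->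
  divides H b (pow H c k) -> exists d c', c = d ** c' /\ divides H d b /\
  divides H b (pow H d k) /\ rel_prime H c' b.
Proof. induction k; intros b c Sc Hb.
  - exists (one H), c. simpl in *. split; [|split; [|split]].
    now rewrite mul1. apply one_dvd. auto. apply rp_unit. eapply dvd_unit; eauto. apply unit_one.
  - simpl in Hb. destruct (hS _ _ _ Hb) as [b1 [b2 [Eb [H1 H2]]]].
    destruct (IHk b2 c Sc H2) as [d2 [c2 [Ec [D2 [B2 R2]]]]].
    rewrite Ec in H1. destruct (hS _ _ _ H1) as [x [y [Exy [Hx [c'' Hy]]]]].
    subst b c b1 c2. exists (d2 ** y), c''. split; [|split; [|split]].
    + mac.
    + destruct D2 as [m ->]. exists (x ** m). mac.
    + simpl. replace (x ** y ** b2) with ((x ** y) ** b2) by mac.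
      apply dvd_mul. apply dvd_mul; auto. apply dvd_refl.
      eapply dvd_trans; [apply B2|]. apply pow_dvd. apply dvd_mulr.
    + assert (R1 : rel_prime H (d2 ** y) c'') by (apply Sqf_rp; rewrite <- mulA; auto).
      apply (rp_mul_r hS); [apply (rp_mul_r hS)|].
      * apply rp_sym. apply (rp_dvd_l (d2 ** y)); auto. apply (dvd_trans x d2); auto. apply dvd_mulr.
      * apply rp_sym. apply (rp_dvd_l (d2 ** y)); auto. apply dvd_mull.
      * apply (rp_dvd_l (y ** c'')); auto. apply dvd_mull. Qed.

Lemma c4_c5 {H : CCMonoid} (hS : pre_Schreier H) : cond4s H -> cond5s H.
Proof. intros c4 a. destruct (c4 a) as [b [c [E [Sc [R [d [Sd [Hd2 [n [Hn Hbn]]]]]]]]]].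
  assert (Db : divides H d b) by (eapply dvd_trans; [|apply Hd2]; rewrite pow2; apply dvd_mulr).
  destruct Db as [e ->].
  exists e, (d ** c). split; [|split].
  - rewrite E. mac.
  - apply Sqf_mul; auto. apply (rp_dvd_l (d ** e)); auto. apply dvd_mulr.
  - exists n. split; auto. rewrite E, pow_mul. apply dvd_mul; auto.
    destruct n. lia. simpl. apply dvd_mulr. Qed.

Lemma c5_c4 {H : CCMonoid} (hS : pre_Schreier H) : cond5s H -> cond4s H.
Proof. intros c5 a. destruct (c5 a) as [b [c [E [Sc [n [Hn Ha]]]]]].
  destruct n as [|k]. lia. simpl in Ha. rewrite E in Ha.
  assert (Hb : divides H b (pow H c k)).
  { apply (dvd_mul_cancel _ _ c). now rewrite (mulC H c b). }
  destruct (split_lemma hS k b c Sc Hb) as [d [c' [Ec [Db [Bd R]]]]].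
  assert (Rdc : rel_prime H d c') by (apply Sqf_rp; now rewrite <- Ec).
  exists (b ** d), c'. split; [|split; [|split]].
  - rewrite E, Ec. mac.
  - apply (Sqf_dvd c); auto. rewrite Ec; apply dvd_mull.
  - apply rp_sym. apply rp_mul_r; auto using rp_sym.
  - exists d. split. apply (Sqf_dvd c); auto. rewrite Ec; apply dvd_mulr. split.
    + rewrite pow2. destruct Db as [m ->]. exists m. mac.
    + exists (S k). split. lia. simpl. rewrite mulC. apply dvd_mul; auto. apply dvd_refl. Qed.

Lemma c4_c4' {H : CCMonoid} (hS : pre_Schreier H) : cond4s H -> cond4's H.
Proof. intros c4 a. destruct (c4 a) as [b [c [E [Sc [R [d [Sd [Hd2 [n [Hn Hbn]]]]]]]]]].
  exists b, c. split; [|split; [|split]]; auto.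
  intros e Se Hb. eapply dvd_trans; [|apply Hd2]. apply pow_dvd.
  apply (Sqf_dvd_pow hS d n); auto. eapply dvd_trans; eauto. Qed.

Lemma c5_c5' {H : CCMonoid} (hS : pre_Schreier H) : cond5s H -> cond5's H.
Proof. intros c5 a. destruct (c5 a) as [b [c [E [Sc [n [Hn Ha]]]]]].
  exists b, c. split; [|split]; auto.
  intros e Se He. apply (Sqf_dvd_pow hS c n); auto. eapply dvd_trans; eauto. Qed.

Theorem proposition4p3 (H : CCMonoid) (hS : pre_Schreier H) :
  (cond1s H -> cond0s H) /\
  (cond3s H -> cond0s H) /\
  (cond1s H <-> cond2s H) /\
  (cond2s H -> cond3s H) /\
  (cond1s H -> cond4s H) /\
  (cond2s H -> cond5s H) /\
  (cond3s H -> cond6s H) /\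
  (cond4s H <-> cond5s H) /\
  (cond4s H -> cond4's H) /\
  (cond5s H -> cond5's H).
Proof.
  split. intro c1. apply c2_c0, CH_c2, c1_CH; auto.
  split. apply c3_c0.
  split. split. intro c1. apply CH_c2, c1_CH; auto. intro c2. apply CH_c1, c2_CH; auto.
  split. intro c2. apply CH_c3, c2_CH; auto.
  split. intro c1. apply CH_c4, c1_CH; auto.
  split. intro c2. apply CH_c5, c2_CH; auto.
  split. apply c3_c6.
  split. split. apply c4_c5; auto. apply c5_c4; auto.
  split. apply c4_c4'; auto.
  apply c5_c5'; auto.
Qed.
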